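(* Let $(V,Y,\mathbf 1,\omega)$ be a vertex operator algebra of central charge $c\ne0$. Then $g(V)_{\ge0}W=W$ for every weak $V$-module $W$; in particular $g(V)_{\ge0}V=V$.
   Context: A weak $V$-module is a module for $V$ regarded as a vertex algebra. For a weak module $W$, $g(V)_{\ge0}W=\mathrm{span}\{v_nw\mid v\in V,\ n\ge0,\ w\in W\}$, where $Y_W(v,x)=\sum_nv_nx^{-n-1}$. *)

(* Defs.v *)
(* Vertex operator algebras and weak modules, following
   Lepowsky--Li, written in terms of modes: Y u n v = u_n v, i.e.
   Y(u,x)v = \sum_n u_n v x^{-n-1}. *)
From mathcomp Require Import all_boot all_algebra.
From mathcomp Require Import reals.
From mathcomp.real_closed Require Import complex.
Set Implicit Arguments. Unset Strict Implicit. Unset Printing Implicit Defensive.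
Import GRing.Theory Num.Theory.
Local Open Scope ring_scope.

Definition gbin (l : int) (i : nat) : int :=
  match l with
  | Posz k => ('C(k, i))%:Z
  | Negz k => (-1) ^+ i * ('C(k + i, i))%:Z
  end.

Section VOA.
Variable K : fieldType.
Variable V : lmodType K.

Definition bilinear_modes (W : lmodType K) (YW : V -> int -> W -> W) : Prop :=
  (forall (n : int) (a : K) (u1 u2 : V) (w : W),
      YW (a *: u1 + u2) n w = a *: YW u1 n w + YW u2 n w) /\
  (forall (n : int) (a : K) (u : V) (w1 w2 : W),
      YW u n (a *: w1 + w2) = a *: YW u n w1 + YW u n w2).

Definition truncation (W : lmodType K) (YW : V -> int -> W -> W) : Prop :=
  forall (u : V) (w : W), exists N : int, forall n : int, N <= n -> YW u n w = 0.

Definition vacuum_property (W : lmodType K) (vac : V) (YW : V -> int -> W -> W)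
  : Prop :=
  forall (n : int) (w : W), YW vac n w = if n == -1 then w else 0.

(* The Jacobi identity, written in its equivalent component form
   (Borcherds identity): for all m n l,
   \sum_{i>=0} binom(m,i) (u_{l+i} v)_{m+n-i} w
   = \sum_{i>=0} (-1)^i binom(l,i)
        (u_{m+l-i} v_{n+i} w - (-1)^l v_{n+l-i} u_{m+i} w);
   both sums are finite by truncation, so equality of the sums is expressed
   as eventual equality of the (stabilizing) partial sums. *)
Definition jacobi_identity (Y : V -> int -> V -> V) (W : lmodType K)
  (YW : V -> int -> W -> W) : Prop :=
  forall (u v : V) (w : W) (m n l : int),
    exists N0 : nat, forall N : nat, (N0 <= N)%N ->
      \sum_(i < N) (gbin m i)%:~R *: YW (Y u (l + i%:Z) v) (m + n - i%:Z) w
      = \sum_(i < N) ((-1) ^+ i * gbin l i)%:~R *: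
           (YW u (m + l - i%:Z) (YW v (n + i%:Z) w)
            - (-1) ^ l *: YW v (n + l - i%:Z) (YW u (m + i%:Z) w)).

Definition is_weak_module (Y : V -> int -> V -> V) (vac : V)
  (W : lmodType K) (YW : V -> int -> W -> W) : Prop :=
  [/\ bilinear_modes YW, truncation YW, vacuum_property vac YW
    & jacobi_identity Y YW].

Definition Lop (Y : V -> int -> V -> V) (om : V) (n : int) : V -> V :=
  Y om (n + 1).

Definition homog (Y : V -> int -> V -> V) (om : V) (n : int) (v : V) : Prop :=
  Lop Y om 0 v = n%:~R *: v.

(* vertex operator algebra (Lepowsky--Li Def. 3.1.22) of central charge c;
   the Z-grading V = \oplus_n V_(n) is the L(0)-eigenspace decomposition *)
Definition is_VOA (Y : V -> int -> V -> V) (vac om : V) (c : K) : Prop :=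
  [/\ is_weak_module Y vac Y,
    (forall (u : V) (n : int), 0 <= n -> Y u n vac = 0) /\
    (forall u : V, Y u (-1) vac = u),
    (forall (m n : int) (v : V),
       Lop Y om m (Lop Y om n v) - Lop Y om n (Lop Y om m v)
       = (m - n)%:~R *: Lop Y om (m + n) v
         + (if m + n == 0 then ((m ^+ 3 - m)%:~R / 12%:R * c) *: v else 0)),
    (* L(-1)-derivative property: Y(L(-1)u,x) = d/dx Y(u,x) *)
    (forall (u : V) (n : int) (w : V),
       Y (Lop Y om (-1) u) n w = - (n%:~R) *: Y u (n - 1) w) &
    [/\ homog Y om 2 om,
        (forall v : V, exists s : seq (int * V),
            (forall p, p \in s -> homog Y om p.1 p.2) /\
            v = \sum_(p <- s) p.2),
        (forall n : int, exists b : seq V, forall v : V, homog Y om n v ->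
            exists coef : nat -> K, v = \sum_(i < size b) coef i *: b`_i)
      & (exists N : int, forall (n : int) (v : V), n < N -> homog Y om n v ->
            v = 0)]].

(* w \in g(V)_{>=0} W = span { v_n w' | v \in V, n >= 0, w' \in W } *)
Definition in_g_ge0 (W : lmodType K) (YW : V -> int -> W -> W) (w : W) : Prop :=
  exists s : seq (K * V * int * W),
    (forall t, t \in s -> 0 <= t.1.2) /\
    w = \sum_(t <- s) t.1.1.1 *: YW t.1.1.2 t.1.2 t.2.

End VOA.

(* Main.v *)
Require Import Defs.
From mathcomp Require Import all_boot all_algebra.
From mathcomp Require Import reals.
From mathcomp.real_closed Require Import complex.
From mathcomp Require Import order.
Import Order.TTheory GRing.Theory Num.Theory.
Local Open Scope ring_scope.

Section Aux.
Variable K : fieldType.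
Variable V : lmodType K.
Variable W : lmodType K.
Variable YW : V -> int -> W -> W.

Lemma g0 : in_g_ge0 YW 0.
Proof. by exists [::]; split => //; rewrite big_nil. Qed.

Lemma gD x y : in_g_ge0 YW x -> in_g_ge0 YW y -> in_g_ge0 YW (x + y).
Proof.
move=> [s1 [H1 ->]] [s2 [H2 ->]]; exists (s1 ++ s2); split; last by rewrite big_cat.
by move=> t; rewrite mem_cat => /orP [/H1|/H2].
Qed.

Lemma gZ a x : in_g_ge0 YW x -> in_g_ge0 YW (a *: x).
Proof.
move=> [s [H ->]].
exists (map (fun t : K * V * int * W => (a * t.1.1.1, t.1.1.2, t.1.2, t.2)) s); split.
  by move=> t /mapP [t' /H Ht' ->].
rewrite big_map scaler_sumr; apply: eq_bigr => t _; by rewrite scalerA.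
Qed.

Lemma gY u k w : 0 <= k -> in_g_ge0 YW (YW u k w).
Proof.
move=> hk; exists [:: (1, u, k, w)]; split; first by move=> t; rewrite inE => /eqP ->.
by rewrite big_seq1 scale1r.
Qed.

Lemma bil_0l : bilinear_modes YW -> forall n w, YW 0 n w = 0.
Proof.
move=> [H _] n w; have E := H n 1 0 0 w; rewrite !scale1r addr0 in E.
by apply: (addrI (YW 0 n w)); rewrite addr0 -E.
Qed.

Lemma bil_0r : bilinear_modes YW -> forall u n, YW u n 0 = 0.
Proof.
move=> [_ H] u n; have E := H n 1 u 0 0; rewrite !scale1r addr0 in E.
by apply: (addrI (YW u n 0)); rewrite addr0 -E.
Qed.

Lemma bil_Zl : bilinear_modes YW -> forall a u n w, YW (a *: u) n w = a *: YW u n w.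
Proof.
move=> B a u n w; have := B.1 n a u 0 w; rewrite addr0 => ->.
by rewrite bil_0l // addr0.
Qed.
End Aux.

Theorem mainTheorem10 (R : realType) (V : lmodType R[i])
  (Y : V -> int -> V -> V) (vac om : V) (c : R[i]) :
  is_VOA Y vac om c -> c != 0 ->
  (forall (W : lmodType R[i]) (YW : V -> int -> W -> W),
      is_weak_module Y vac YW -> forall w : W, in_g_ge0 YW w) /\
  (forall v : V, in_g_ge0 Y v).
Proof.
move=> [HV [cr1 cr2] vir _ _] c0.
have BV : bilinear_modes Y by case: HV.
set d : R[i] := ((2 ^+ 3 - 2)%:~R / 12%:R * c).
have d0 : d != 0.
  rewrite /d mulf_neq0 //; have -> : (2 ^+ 3 - 2 : int) = 6 by [].
  by rewrite mulf_neq0 // ?invr_eq0 // ?intr_eq0 ?pnatr_eq0.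
have omE : Y om (-1) vac = om by apply: cr2.
have Lvac : forall k : int, -1 <= k -> Lop Y om k vac = 0.
  move=> k hk; rewrite /Lop cr1 //; by rewrite -(lerD2r 1) in hk.
have Vk : forall k : int, -1 <= k -> Lop Y om k om =
    (k + 2)%:~R *: Lop Y om (k - 2) vac
    + (if k - 2 == 0 then ((k ^+ 3 - k)%:~R / 12%:R * c) *: vac else 0).
  move=> k hk; have := vir k (-2) vac.
  have -> : Lop Y om (-2) vac = om by rewrite /Lop; have -> : (-2 + 1 : int) = -1 by [].
  rewrite (Lvac k hk) {2}/Lop bil_0r // subr0 opprK.
  by [].
have om3 : Y om 3 om = d *: vac.
  have := Vk 2 isT; rewrite (Lvac 0) // scaler0 add0r.
  by rewrite /Lop.
have omk : forall i : nat, (0 < i)%N -> Y om (3 + i%:Z) om = 0.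
  move=> i hi.
  have hk : (-1 : int) <= 2 + i%:Z by apply: (@le_trans _ _ 0) => //; exact: addr_ge0.
  have := Vk _ hk.
  rewrite Lvac; last by apply: (@le_trans _ _ 0) => //; exact: addr_ge0.
  rewrite scaler0 add0r.
  have -> : (2 + i%:Z - 2 == 0) = false.
    by apply/negbTE; rewrite addrAC subrr add0r eqz_nat -lt0n.
  rewrite /Lop; have -> : 2 + i%:Z + 1 = 3 + i%:Z.
    by rewrite addrAC; congr (_ + _).
  by [].
suff main : forall (W : lmodType R[i]) (YW : V -> int -> W -> W),
      is_weak_module Y vac YW -> forall w : W, in_g_ge0 YW w.
  by split => //; apply: main.
move=> W YW [BW TW VW JW] w.
have [Nt HNt] := TW om w.
pose M : nat := `|Nt|%N.
have hM : Nt <= M%:Z by rewrite /M abszE ler_norm.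
have [N0 HJ] := JW om om w M%:Z (-1 - M%:Z) 3.
have E := HJ N0.+1 (leqnSn _).
have L : \sum_(i < N0.+1) (gbin M%:Z i)%:~R *:
     YW (Y om (3 + i%:Z) om) (M%:Z + (-1 - M%:Z) - i%:Z) w = d *: w.
  rewrite big_ord_recl big1 ?addr0.
    rewrite [M%:Z + _]addrC subrK /gbin bin0 scale1r om3 bil_Zl //.
    by rewrite VW eqxx.
  move=> i _; rewrite /= omk // bil_0l //; exact: scaler0.
rewrite L in E.
have G : in_g_ge0 YW (d *: w).
  rewrite E; apply: (big_ind (in_g_ge0 YW)); [exact: g0 | exact: gD |].
  move=> i _.
  have -> : YW om (M%:Z + i%:Z) w = 0.
    apply: HNt; apply: (le_trans hM); by rewrite lerDl.
  rewrite bil_0r // scaler0 subr0.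
  case: (leqP i 3) => hi.
    apply: gZ; apply: gY.
    by rewrite -addrA addr_ge0 // subr_ge0 lez_nat.
  have -> : gbin 3 i = 0 by rewrite /gbin /= bin_small.
  rewrite mulr0 scale0r; exact: g0.
have -> : w = d^-1 *: (d *: w) by rewrite scalerA mulVf // scale1r.
exact: gZ.
Qed.
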